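(* Let $X$ be a Banach space and let $(C_n)_{n\in\mathbb N}$ be a nested (i.e. $C_{n+1}\subset C_n$) sequence of bounded, closed, convex subsets of $X$. Suppose that $K=\bigcap_n\overline{C_n}^{w^*}$ is metrizable in the weak* topology. Then: (1) every $g\in K$ is the weak*-limit of a sequence $(c_n)$ with $c_n\in C_n$ for each $n$; (2) every sequence $(c_n)$ with $c_n\in C_n$ for each $n$ admits a subsequence that is weak*-convergent in $X^{**}$.
   Context: $X$ is regarded as a subspace of $X^{**}$ via the canonical embedding, and $\overline{A}^{w^*}$ denotes the weak*-closure in $X^{**}$ of $A\subset X$. *)

(* Defs.v *)
From HB Require Import structures.
From mathcomp Require Import all_boot all_order all_algebra.
From mathcomp Require Import all_classical all_reals all_analysis.
Set Implicit Arguments. Unset Strict Implicit. Unset Printing Implicit Defensive.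
Import Order.TTheory GRing.Theory Num.Theory.
Import numFieldNormedType.Exports.
Local Open Scope classical_set_scope.
Local Open Scope ring_scope.

Section Bidual.
Variables (R : realType) (X : normedModType R).

Definition dualsp : set (X -> R) :=
  [set f | (forall (a : R) (x y : X), f (a *: x + y) = a * f x + f y)
           /\ continuous f].

(* X^** : elements are functionals phi on X^* (represented as maps on all of
   X -> R, canonically normalized to 0 off X^* ), linear and bounded for the
   dual (operator) norm: |phi f| <= M * ||f||, written out as
   |phi f| <= M * c whenever |f x| <= c * ||x|| for all x. *)
Definition bidualsp : set ((X -> R) -> R) :=
  [set phi |
    (forall f, ~ dualsp f -> phi f = 0)
    /\ (forall (a : R) f g, dualsp f -> dualsp g ->
          phi (fun x => a * f x + g x) = a * phi f + phi g)
    /\ (exists M : R, forall f (c : R), dualsp f ->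
          (forall x, `|f x| <= c * `|x|) -> `|phi f| <= M * c)].

Definition canon (x : X) : (X -> R) -> R :=
  fun f => if pselect (dualsp f) then f x else 0.

Definition wstar_closure (A : set X) : set ((X -> R) -> R) :=
  [set g | bidualsp g /\
    forall (s : seq (X -> R)) (e : R), (forall f, f \in s -> dualsp f) ->
      0 < e -> exists2 a, A a & forall f, f \in s -> `|canon a f - g f| < e].

Definition wstar_metrizable (K : set ((X -> R) -> R)) : Prop :=
  exists d : ((X -> R) -> R) -> ((X -> R) -> R) -> R,
    [/\ (forall g h, K g -> K h -> 0 <= d g h),
        (forall g h, K g -> K h -> (d g h = 0 <-> g = h)),
        (forall g h, K g -> K h -> d g h = d h g) &
        (forall g h k, K g -> K h -> K k -> d g k <= d g h + d h k)] /\
    ((* every metric ball contains a relative weak* neighbourhood *)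
        (forall g (e : R), K g -> 0 < e ->
           exists (s : seq (X -> R)) (dl : R),
             [/\ (forall f, f \in s -> dualsp f), 0 < dl &
                 forall h, K h -> (forall f, f \in s -> `|h f - g f| < dl) ->
                   d g h < e]) /\
        (* every relative weak* neighbourhood contains a metric ball *)
        (forall g (s : seq (X -> R)) (dl : R), K g ->
           (forall f, f \in s -> dualsp f) -> 0 < dl ->
           exists2 e : R, 0 < e &
             forall h, K h -> d g h < e -> forall f, f \in s -> `|h f - g f| < dl)).

Definition bounded_sub (A : set X) : Prop :=
  exists M : R, forall x, A x -> `|x| <= M.

Definition convex_sub (A : set X) : Prop :=
  forall x y (t : R), A x -> A y -> 0 <= t <= 1 -> A (t *: x + (1 - t) *: y).

End Bidual.

(* Main.v *)
Require Import Defs.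
From HB Require Import structures.
From mathcomp Require Import all_boot all_order all_algebra.
From mathcomp Require Import all_classical all_reals all_analysis.
From mathcomp Require Import lra ring.
Import Order.TTheory GRing.Theory Num.Theory.
Import numFieldNormedType.Exports.
Local Open Scope classical_set_scope.
Local Open Scope ring_scope.

Lemma ultra_bounded_cvg (R : realType) (U : set_system nat) (FU : UltraFilter U)
  (u : nat -> R) (B : R) : (forall n, `|u n| <= B) -> cvg (u @ U).
Proof.
move=> uB.
have hB : U (fun n => u n \in `[-B, B]).
  apply: filterE => n /=.
  by rewrite in_itv /= -ler_norml.
have [p [_ clp]] := segment_compact (F := u @ U) _ hB.
apply/cvg_ex; exists p => V nV.
case: (in_ultra_setVsetC (u @^-1` V) FU) => // HC.
have [x [Cx Vx]] := clp (~` V) V HC nV.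
by case: Cx.
Qed.

Lemma dual0 (R : realType) (X : normedModType R) (f : X -> R) :
  dualsp f -> f 0 = 0.
Proof.
move=> [lin _]; have h := lin 1 0 0.
rewrite scale1r addr0 mul1r in h.
lra.
Qed.
Arguments dual0 {R X f}.

Lemma dualZ (R : realType) (X : normedModType R) (f : X -> R) a x :
  dualsp f -> f (a *: x) = a * f x.
Proof.
move=> df; have := df.1 a x 0; rewrite addr0 (dual0 df) addr0; exact.
Qed.
Arguments dualZ {R X f}.

Lemma dual_bounded (R : realType) (X : normedModType R) (f : X -> R) :
  dualsp f -> exists k : R, 0 <= k /\ forall x, `|f x| <= k * `|x|.
Proof.
move=> df; have [lin cf] := df.
have := cf 0; move/cvgrPdist_lt => /(_ 1 ltr01).
rewrite dual0 // => /nbhs_ballP [e /= e0 He].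
exists (2 / e); split; first by rewrite divr_ge0 // ltW.
move=> x; have [->|x0] := eqVneq x 0; first by rewrite dual0 // normr0 normr0 mulr0.
have nx : 0 < `|x| by rewrite normr_gt0.
set t := e / (2 * `|x|).
have t0 : 0 < t by rewrite divr_gt0 // mulr_gt0.
have := He (t *: x); rewrite -ball_normE /ball_ /= !sub0r !normrN normrZ (gtr0_norm t0) (dualZ _ _ df) normrM (gtr0_norm t0).
have -> : t * `|x| = e / 2 by rewrite /t; field; rewrite gt_eqF.
have eh : e / 2 < e by lra.
move=> /(_ eh); rewrite /t => h.
have : e * `|f x| < 2 * `|x|.
  have h2 : e / (2 * `|x|) * `|f x| * (2 * `|x|) < 1 * (2 * `|x|).
    by rewrite ltr_pM2r // mulr_gt0.
  have -> : e * `|f x| = e / (2 * `|x|) * `|f x| * (2 * `|x|).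
    by field; rewrite gt_eqF.
  by rewrite mul1r in h2.
move=> h3; rewrite mulrAC ler_pdivlMr //; rewrite mulrC; exact: ltW.
Qed.
Arguments dual_bounded {R X f}.

Lemma dual_comb (R : realType) (X : normedModType R) (f g : X -> R) (a : R) :
  dualsp f -> dualsp g -> dualsp (fun x => a * f x + g x).
Proof.
move=> [lf cf] [lg cg]; split.
  by move=> b x y; rewrite lf lg; ring.
move=> x; apply: cvgD; last exact: cg.
by apply: cvgM; [exact: cvg_cst | exact: cf].
Qed.
Arguments dual_comb {R X f g}.

Definition hU (R : realType) (X : normedModType R) (U : set_system nat)
  (y : nat -> X) : (X -> R) -> R :=
  fun f => if pselect (dualsp f) then lim ((fun n => f (y n)) @ U) else 0.
Arguments hU {R X}.

Lemma hU_cvg (R : realType) (X : normedModType R) (U : set_system nat)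
  (FU : UltraFilter U) (y : nat -> X) (B : R) :
  (forall n, `|y n| <= B) -> forall f, dualsp f ->
  (fun n => f (y n)) @ U --> hU U y f.
Proof.
move=> yB f df; rewrite /hU; destruct (pselect (dualsp f)) as [d1|nd]; last by [].
have [k [k0 hk]] := dual_bounded df.
apply: (@ultra_bounded_cvg R U FU _ (k * B)) => n.
by apply: le_trans (hk _) _; rewrite ler_wpM2l.
Qed.
Arguments hU_cvg {R X U} FU {y B} yB {f} df.

Lemma hU_bidual (R : realType) (X : normedModType R) (U : set_system nat)
  (FU : UltraFilter U) (y : nat -> X) (B : R) :
  (forall n, `|y n| <= B) -> bidualsp (hU U y).
Proof.
move=> yB; split.
  by move=> f nf; rewrite /hU; destruct (pselect (dualsp f)).
split.
  move=> a f g df dg.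
  have dc := dual_comb a df dg.
  rewrite {1}/hU; destruct (pselect (dualsp (fun x => a * f x + g x))) as [d1|];
    last by [].
  rewrite /=.
  apply: (cvg_lim (@norm_hausdorff _ _)).
  have h1 := hU_cvg FU yB df; have h2 := hU_cvg FU yB dg.
  exact: (cvgD (cvgM (cvg_cst a) h1) h2).
have cn : cvg ((fun n => `|y n|) @ U).
  apply: (@ultra_bounded_cvg R U FU (fun n => `|y n|) B) => n.
  rewrite ger0_norm //; exact: yB.
exists (lim ((fun n => `|y n|) @ U)) => f c df hc.
rewrite mulrC; apply: (ler_cvg_to (a := U) (f := fun n => `|f (y n)|) (g := fun n => c * `|y n|)).
- exact: cvg_norm (hU_cvg FU yB df).
- exact: (cvgM (cvg_cst c) cn).
- by apply: filterE => n; exact: hc.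
Qed.
Arguments hU_bidual {R X U} FU {y B} yB.

Lemma hU_near (R : realType) (X : normedModType R) (U : set_system nat)
  (FU : UltraFilter U) (y : nat -> X) (B : R) :
  (forall n, `|y n| <= B) -> forall (s : seq (X -> R)) (e : R),
  (forall f, f \in s -> dualsp f) -> 0 < e ->
  U [set n | forall f, f \in s -> `|f (y n) - hU U y f| < e].
Proof.
move=> yB s e sd e0.
have PU : ProperFilter U by exact: ultra_proper.
elim: s sd => [|f s IH] sd.
  by apply: filterE => n f; rewrite in_nil.
have df : dualsp f by apply: sd; rewrite mem_head.
have h1 := (@cvgrPdist_lt _ _ _ U _ _ _).1 (hU_cvg FU yB df) e e0.
have h2 : U [set n | forall f, f \in s -> `|f (y n) - hU U y f| < e].
  by apply: IH => g gs; apply: sd; rewrite in_cons gs orbT.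
have {}h1 : U [set n | `|hU U y f - f (y n)| < e].
  by apply: h1; typeclasses eauto.
apply: filterS (filterI h1 h2) => n [/= hn1 hn2] g.
by rewrite in_cons => /orP [/eqP ->|/hn2 //]; rewrite distrC.
Qed.
Arguments hU_near {R X U} FU {y B} yB {s e} sd e0.

Lemma hU_closure (R : realType) (X : normedModType R) (U : set_system nat)
  (FU : UltraFilter U) (y : nat -> X) (B : R) :
  (forall n, `|y n| <= B) -> forall A, U (y @^-1` A) ->
  wstar_closure A (hU U y).
Proof.
move=> yB A UA; rewrite /wstar_closure /=; split.
  exact: (hU_bidual FU yB).
move=> s e sd e0.
have [n [hn An]] := filter_ex (filterI (hU_near FU yB sd e0) UA).
exists (y n) => // f fs; rewrite /Defs.canon.
destruct (pselect (dualsp f)) as [d1|nd]; last by case: nd; exact: sd.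
exact: hn.
Qed.
Arguments hU_closure {R X U} FU {y B} yB {A} UA.

Lemma up_cvg (R : realType) (u : nat -> R) (l : R) :
  (forall U : set_system nat, UltraFilter U -> \oo `<=` U -> u @ U --> l) ->
  u @ \oo --> l.
Proof.
move=> H; apply: contrapT => Hn.
have [V nV nUV] : exists2 V, nbhs l V & ~ (\forall n \near \oo, V (u n)).
  apply: contrapT => Hc; apply: Hn => V nV; apply: contrapT => h.
  by apply: Hc; exists V.
pose F := fun P : set nat =>
  exists N, forall n, (N <= n)%N -> ~ V (u n) -> P n.
have FF : ProperFilter F.
  apply: Build_ProperFilter_ex.
    move=> P [N HN]; apply: contrapT => nP; apply: nUV.
    apply: filterS (nbhs_infty_ge N) => n Nn; apply: contrapT => nVn.
    by apply: nP; exists n; exact: HN.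
  split.
  - by exists 0%N.
  - move=> P Q [N1 H1] [N2 H2]; exists (maxn N1 N2) => n.
    rewrite geq_max => /andP [n1 n2] nv; split; [exact: H1|exact: H2].
  - move=> P Q PQ [N HN]; exists N => n Nn nv; exact/PQ/HN.
have [G [UG FG]] := ultraFilterLemma FF.
have sub : \oo `<=` G.
  move=> P [N _ HN]; apply: FG; exists N => n Nn _; exact: HN.
have h1 : G (u @^-1` V) := H G UG sub V nV.
have h2 : G (fun n => ~ V (u n)) by apply: FG; exists 0%N.
have PG : ProperFilter G by exact: ultra_proper.
by have [n [/= ? ?]] := filter_ex (filterI h1 h2).
Qed.

Lemma Cmono (X : Type) (C : nat -> set X) :
  (forall n, C n.+1 `<=` C n) -> forall m n, (m <= n)%N -> C n `<=` C m.
Proof.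
move=> dec m; elim=> [|n IH]; first by rewrite leqn0 => /eqP ->.
rewrite leq_eqVlt => /orP [/eqP -> //|]; rewrite ltnS => mn x Cx.
exact/IH/dec.
Qed.
Arguments Cmono {X C}.

Lemma lemA (R : realType) (X : normedModType R) (C : nat -> set X) (B : R)
  (g : (X -> R) -> R) (S : nat -> seq (X -> R)) (y : nat -> X) :
  (forall n, C n.+1 `<=` C n) ->
  (forall x, C 0 x -> `|x| <= B) ->
  (forall h, (\bigcap_n wstar_closure (C n)) h ->
     (forall j f, f \in S j -> h f = g f) -> h = g) ->
  (forall n, C n (y n)) ->
  (forall j f, f \in S j -> dualsp f /\ (fun n => f (y n)) @ \oo --> g f) ->
  forall f, dualsp f -> (fun n => f (y n)) @ \oo --> g f.
Proof.
move=> dec bnd sep yC conv f df; apply: up_cvg => U UU sub.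
have PU : ProperFilter U by exact: ultra_proper.
have yB : forall n, `|y n| <= B.
  by move=> n; apply: bnd; apply: (Cmono dec _ _ (leq0n n)).
have Kh : (\bigcap_n wstar_closure (C n)) (hU U y).
  move=> m _; apply: (hU_closure UU yB); apply: sub.
  apply: filterS (nbhs_infty_ge m) => n mn; exact: (Cmono dec _ _ mn).
have e : hU U y = g.
  apply: sep => // j f' f'S.
  have [df' cf'] := conv j f' f'S.
  apply: (cvg_unique (@norm_hausdorff _ _) (F := (fun n => f' (y n)) @ U)).
    exact: (hU_cvg UU yB df').
  by move=> V nV; apply: sub; exact: cf' V nV.
rewrite -e; exact: (hU_cvg UU yB df).
Qed.

Lemma metr_data (R : realType) (X : normedModType R)
  (K : set ((X -> R) -> R)) (g : (X -> R) -> R) :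
  wstar_metrizable K -> K g ->
  exists S : nat -> seq (X -> R),
    (forall j f, f \in S j -> dualsp f) /\
    (forall h, K h -> (forall j f, f \in S j -> h f = g f) -> h = g).
Proof.
move=> [d [[d0 dE dC _] [ball1 _]]] Kg.
have := fun j : nat => ball1 g (j.+1%:R^-1) Kg ltac:(by rewrite invr_gt0).
move=> /choice [sd Hsd].
exists sd; split.
  by move=> j f; have [dl [H1 _ _]] := Hsd j; exact: H1.
move=> h Kh agree.
have lt : forall j, d g h < j.+1%:R^-1.
  move=> j; have ag := agree j; have [dl [_ dl0 H3]] := Hsd j.
  by apply: H3 => // f fs; rewrite ag // subrr normr0.
have dgh0 : d g h = 0.
  apply/eqP; rewrite eq_le d0 // andbT; apply: contrapT => /negP.
  rewrite -ltNge => dpos.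
  have /filter_ex [j Hj] := near_infty_natSinv_lt (PosNum dpos).
  by have := lt_trans (lt j) Hj; rewrite ltxx.
by apply/esym; apply/(dE g h Kg Kh).
Qed.
Arguments metr_data {R X K g}.
Arguments lemA {R X C B g S y}.

Theorem lemma1 (R : realType) (X : completeNormedModType R)
  (C : nat -> set X) :
  (forall n, C n.+1 `<=` C n) ->
  (forall n, bounded_sub (C n)) ->
  (forall n, closed (C n)) ->
  (forall n, convex_sub (C n)) ->
  wstar_metrizable (\bigcap_n wstar_closure (C n)) ->
  (forall g, (\bigcap_n wstar_closure (C n)) g ->
     exists c : nat -> X, (forall n, C n (c n)) /\
       forall f, dualsp f -> (fun n => f (c n)) @ \oo --> g f)
  /\
  (forall c : nat -> X, (forall n, C n (c n)) ->
     exists sigma : nat -> nat, (forall n, (sigma n < sigma n.+1)%N) /\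
       exists2 psi, bidualsp psi &
         forall f, dualsp f -> (fun n => f (c (sigma n))) @ \oo --> psi f).
Proof.
move=> dec bndC _ _ metr; have [B bnd] := bndC 0%N.
have flat : forall (S : nat -> seq (X -> R)) m j f, (j <= m)%N -> f \in S j ->
    f \in flatten [seq S i | i <- iota 0 m.+1].
  move=> S m j f jm fs; apply/flattenP; exists (S j) => //.
  by apply/mapP; exists j => //; rewrite mem_iota add0n ltnS jm.
have flatd : forall (S : nat -> seq (X -> R)) m,
    (forall j f, f \in S j -> dualsp f) ->
    forall f, f \in flatten [seq S i | i <- iota 0 m.+1] -> dualsp f.
  by move=> S m Sd f /flattenP [s /mapP [j _ ->]]; exact: Sd.
split.
- move=> g Kg.
  have [S [Sd sep]] := metr_data metr Kg.
  have ex : forall m, exists a, C m a /\ forall j, (j <= m)%N ->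
      forall f, f \in S j -> `|f a - g f| < m.+1%:R^-1.
    move=> m; have [_ Hc] := Kg m I.
    have e0 : 0 < m.+1%:R^-1 :> R by rewrite invr_gt0.
    have [a Ca Ha] := Hc _ _ (flatd S m Sd) e0.
    exists a; split => // j jm f fs.
    have := Ha f (flat S m j f jm fs); rewrite /Defs.canon.
    by destruct (pselect (dualsp f)) as [d1|nd] => //; case: nd; exact: Sd fs.
  have [c Hc] := choice ex.
  exists c; split; first by move=> n; case: (Hc n).
  apply: (lemA dec bnd sep (fun n => (Hc n).1)).
  move=> j f fs; split; first exact: Sd fs.
  apply/cvgrPdist_lt => eps eps0.
  apply: filterS (filterI (nbhs_infty_ge j) (near_infty_natSinv_lt (PosNum eps0))).
  move=> n [/= jn lt]; rewrite distrC; exact: lt_trans ((Hc n).2 j jn f fs) lt.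
- move=> c cC.
  have [U [UU sub]] := ultraFilterLemma eventually_filter.
  have PU : ProperFilter U by exact: ultra_proper.
  have cB : forall n, `|c n| <= B.
    by move=> n; apply: bnd; exact: (Cmono dec _ _ (leq0n n) _ (cC n)).
  have Kh : (\bigcap_n wstar_closure (C n)) (hU U c).
    move=> m _; apply: (hU_closure UU cB); apply: sub.
    apply: filterS (nbhs_infty_ge m) => n mn; exact: (Cmono dec _ _ mn).
  have [S [Sd sep]] := metr_data metr Kh.
  pose P m n := forall j, (j <= m)%N -> forall f, f \in S j ->
    `|f (c n) - hU U c f| < m.+1%:R^-1.
  have UP : forall m, U (P m).
    move=> m; have e0 : 0 < m.+1%:R^-1 :> R by rewrite invr_gt0.
    apply: filterS (hU_near UU cB (flatd S m Sd) e0) => n Hn j jm f fs.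
    exact/Hn/(flat S m j f jm fs).
  have ex : forall mk : nat * nat, exists n, (mk.2 <= n)%N /\ P mk.1 n.
    case=> m k.
    have [n [kn Pn]] := filter_ex (filterI (sub _ (nbhs_infty_ge k)) (UP m)).
    by exists n.
  have [tau Htau] := choice ex.
  pose sg := fix sg m := if m is m'.+1 then tau (m'.+1, (sg m').+1)
                         else tau (0%N, 0%N).
  have sgS : forall m, (sg m < sg m.+1)%N.
    by move=> m; exact: (Htau (m.+1, (sg m).+1)).1.
  have sgP : forall m, P m (sg m).
    by case=> [|m]; [exact: (Htau (0%N, 0%N)).2 | exact: (Htau (m.+1, (sg m).+1)).2].
  have sgge : forall m, (m <= sg m)%N.
    by elim=> [|m IH] //; exact: leq_ltn_trans IH (sgS m).
  exists sg; split => //.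
  exists (hU U c); first exact: (hU_bidual UU cB).
  apply: (lemA (y := fun n => c (sg n)) dec bnd sep).
    by move=> n; exact: (Cmono dec _ _ (sgge n) _ (cC _)).
  move=> j f fs; split; first exact: Sd fs.
  apply/cvgrPdist_lt => eps eps0.
  apply: filterS (filterI (nbhs_infty_ge j) (near_infty_natSinv_lt (PosNum eps0))).
  move=> n [/= jn lt]; rewrite distrC; exact: lt_trans (sgP n j jn f fs) lt.
Qed.
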